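(* Let $\Gamma$ be a finite group and let $(X,\Gamma,\alpha,\mathcal{I})$ be a voltage graph, with $\mathcal{I}=(I_v)_{v\in V_X}$, such that the derived graph $X(\Gamma,\mathcal{I})$ is connected. (1) There is an exact sequence of $\mathbb{Z}[\Gamma]$-modules \[ 0\to\mathbb{Z}\to\bigoplus_{v\in V_X}\mathbb{Z}[\Gamma/I_v]\xrightarrow{\mathcal{L}_{X,\Gamma,\mathcal{I}}}\bigoplus_{v\in V_X}\mathbb{Z}[\Gamma/I_v]\to\mathrm{Pic}(X(\Gamma,\mathcal{I}))\to0. \] Here the first map sends $1$ to the sum of all cosets in all components. (2) Let $H$ be a normal subgroup of $\Gamma$, and let $(X,\Gamma/H,\alpha_H,\mathcal{I}_H)$ be the induced voltage graph. Then the exact sequence of (1) for $(X,\Gamma,\alpha,\mathcal{I})$ and the exact sequence of (1) for $(X,\Gamma/H,\alpha_H,\mathcal{I}_H)$, namely \[ 0\to\mathbb{Z}\to\bigoplus_v\mathbb{Z}[\Gamma/I_vH]\xrightarrow{\mathcal{L}_{X,\Gamma/H,\mathcal{I}_H}}\bigoplus_v\mathbb{Z}[\Gamma/I_vH]\to\mathrm{Pic}(X(\Gamma/H,\mathcal{I}_H))\to0, \] fit into a commutative diagram with the following vertical maps: - multiplication by $\#H$ on $\mathbb{Z}$; - the map $\beta:\bigoplus_v\mathbb{Z}[\Gamma/I_v]\to\bigoplus_v\mathbb{Z}[\Gamma/I_vH]$, which is $\mathbb{Z}[\Gamma]$-linear and on the $v$-component sends $1$ to $\#(H\cap I_v)\cdot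 1$; - the natural projection $\bigoplus_v\mathbb{Z}[\Gamma/I_v]\to\bigoplus_v\mathbb{Z}[\Gamma/I_vH]$; - the surjection $\mathrm{Pic}(X(\Gamma,\mathcal{I}))\to\mathrm{Pic}(X(\Gamma/H,\mathcal{I}_H))$ induced by this projection.
   Context: Finite graphs are in Serre's formalism: vertex set $V_X$, edge set $\mathbb{E}_X$ with fixed-point-free involution $e\mapsto\bar e$, and maps $s,t$ with $s(\bar e)=t(e)$; $\mathbb{E}_{X,v}=\{e:s(e)=v\}$. For a finite connected graph $Y$, $\mathrm{Div}(Y)=\bigoplus_{w\in V_Y}\mathbb{Z}[w]$, $\mathcal{L}_Y([w])=\sum_{e\in\mathbb{E}_{Y,w}}([w]-[t(e)])$, and $\mathrm{Pic}(Y)=\mathrm{coker}\,\mathcal{L}_Y$. A voltage graph $(X,\Gamma,\alpha,\mathcal{I})$ consists of a finite graph $X$, a group $\Gamma$, a map $\alpha:\mathbb{E}_X\to\Gamma$ with $\alpha(\bar e)=\alpha(e)^{-1}$, and a family $\mathcal{I}=(I_v)_{v\in V_X}$ of subgroups of $\Gamma$. The derived graph $X(\Gamma,\mathcal{I})$ (for finite $\Gamma$) has vertex set $\coprod_v(\Gamma/I_v\times\{v\})$ and edge set $\Gamma\times\mathbb{E}_X$, with $s((\gamma,e))=(\gamma I_{s(e)},s(e))$, $t((\gamma,e))=(\gamma\alpha(e)I_{t(e)},t(e))$ and $\overline{(\gamma,e)}=(\gamma\alpha(e),\bar e)$; $\Gamma$ acts by left multiplication. For a normal subgroup $H$ with projection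 $\pi:\Gamma\to\Gamma/H$, the induced voltage graph is $(X,\Gamma/H,\pi\circ\alpha,(I_vH/H)_v)$. Let $\mathbb{Z}[\Gamma/I_v]=\mathbb{Z}[\Gamma]\otimes_{\mathbb{Z}[I_v]}\mathbb{Z}$. We identify $\mathrm{Div}(X(\Gamma,\mathcal{I}))\cong\bigoplus_{v\in V_X}\mathbb{Z}[\Gamma/I_v]$ as $\mathbb{Z}[\Gamma]$-modules via $(\gamma I_v,v)\leftrightarrow\gamma$ in the $v$-component. Then $\mathcal{L}_{X,\Gamma,\mathcal{I}}$ is the endomorphism corresponding to $\mathcal{L}_{X(\Gamma,\mathcal{I})}$ under this identification, and similarly for $\Gamma/H$, where $(\Gamma/H)/(I_vH/H)$ is identified with $\Gamma/I_vH$. *)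

(* Defs.v *)
From HB Require Import structures.
From mathcomp Require Import all_boot all_order all_fingroup all_algebra.
From mathcomp Require Import generic_quotient.
From Stdlib Require Import ClassicalDescription.
Set Implicit Arguments. Unset Strict Implicit. Unset Printing Implicit Defensive.
Import GRing.Theory.
Local Open Scope ring_scope.
Local Open Scope quotient_scope.

Definition serre_graph (VT ET : finType) (src tgt : ET -> VT) (bar : ET -> ET) : Prop :=
  [/\ forall e, bar (bar e) = e, forall e, bar e <> e & forall e, src (bar e) = tgt e].

Definition edge_rel (VT ET : finType) (src tgt : ET -> VT) : rel VT :=
  fun x y => [exists e : ET, (src e == x) && (tgt e == y)].
Definition connected_graph (VT ET : finType) (src tgt : ET -> VT) : Prop :=
  (0 < #|VT|)%N /\ forall x y : VT, connect (edge_rel src tgt) x y.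

Definition divisor (VT : finType) := {ffun VT -> int}.
Definition delta (VT : finType) (w : VT) : divisor VT := [ffun u => ((u == w) : nat)%:Z].

Definition laplacian (VT ET : finType) (src tgt : ET -> VT) (D : divisor VT) : divisor VT :=
  \sum_(w : VT) (\sum_(e : ET | src e == w) (delta w - delta (tgt e))) *~ D w.

Lemma laplacianD (VT ET : finType) (src tgt : ET -> VT) (D1 D2 : divisor VT) :
  laplacian src tgt (D1 + D2) = laplacian src tgt D1 + laplacian src tgt D2.
Proof.
rewrite /laplacian -big_split /=; apply: eq_bigr => w _.
by rewrite ffunE mulrzDr.
Qed.

Lemma laplacian0 (VT ET : finType) (src tgt : ET -> VT) :
  laplacian src tgt 0 = 0.
Proof. by apply: big1 => w _; rewrite ffunE mulr0z. Qed.

Lemma laplacianN (VT ET : finType) (src tgt : ET -> VT) (D : divisor VT) :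
  laplacian src tgt (- D) = - laplacian src tgt D.
Proof.
apply/eqP; rewrite -subr_eq0 opprK -laplacianD addNr; exact/eqP/laplacian0.
Qed.

Definition pic_rel (VT ET : finType) (src tgt : ET -> VT) : rel (divisor VT) :=
  fun D D' => if excluded_middle_informative
                   (exists D0 : divisor VT, D - D' = laplacian src tgt D0)
              then true else false.

Lemma pic_relP (VT ET : finType) (src tgt : ET -> VT) D D' :
  reflect (exists D0, D - D' = laplacian src tgt D0) (pic_rel src tgt D D').
Proof. by rewrite /pic_rel; case: excluded_middle_informative => h; constructor. Qed.

Lemma pic_rel_refl (VT ET : finType) (src tgt : ET -> VT) : reflexive (pic_rel src tgt).
Proof. by move=> D; apply/pic_relP; exists 0; rewrite subrr laplacian0. Qed.

Lemma pic_rel_sym (VT ET : finType) (src tgt : ET -> VT) : symmetric (pic_rel src tgt).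
Proof.
move=> D D'; apply/pic_relP/pic_relP => -[D0 h]; exists (- D0);
by rewrite laplacianN -h opprB.
Qed.

Lemma pic_rel_trans (VT ET : finType) (src tgt : ET -> VT) : transitive (pic_rel src tgt).
Proof.
move=> D2 D1 D3 /pic_relP[A hA] /pic_relP[B hB]; apply/pic_relP; exists (A + B).
by rewrite laplacianD -hA -hB addrA subrK.
Qed.

Canonical pic_equiv (VT ET : finType) (src tgt : ET -> VT) :=
  EquivRel (pic_rel src tgt) (@pic_rel_refl VT ET src tgt)
           (@pic_rel_sym VT ET src tgt) (@pic_rel_trans VT ET src tgt).

Definition Pic (VT ET : finType) (src tgt : ET -> VT) := {eq_quot (pic_equiv src tgt)}.
Definition to_pic (VT ET : finType) (src tgt : ET -> VT) (D : divisor VT) : Pic src tgt :=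
  \pi_(Pic src tgt) D.

Definition dvert (V : finType) (gT : finGroupType) (I : V -> {group gT}) :=
  {p : V * {set gT} | p.2 \in lcosets (I p.1) [set: gT]}.

Lemma mkvert_proof (V : finType) (gT : finGroupType) (I : V -> {group gT}) (v : V) (g : gT) :
  (v, (g *: (I v : {set gT}))%g).2 \in lcosets (I (v, (g *: (I v : {set gT}))%g).1) [set: gT].
Proof.
rewrite /= mem_lcosets; have := mem_mulg (in_setT g) (group1 (I v)).
by rewrite mulg1.
Qed.

Definition mkvert (V : finType) (gT : finGroupType) (I : V -> {group gT}) (v : V) (g : gT)
  : dvert I := exist _ (v, (g *: (I v : {set gT}))%g) (mkvert_proof I v g).
Arguments mkvert {V gT} I v g.

Definition dvert_base (V : finType) (gT : finGroupType) (I : V -> {group gT})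
  (x : dvert I) : V := (val x).1.
Definition dvert_coset (V : finType) (gT : finGroupType) (I : V -> {group gT})
  (x : dvert I) : {set gT} := (val x).2.

(* edges of X(Gamma, I): Gamma x E_X *)
Definition dsrc (V E : finType) (gT : finGroupType) (s : E -> V) (I : V -> {group gT})
  (ge : gT * E) : dvert I := mkvert I (s ge.2) ge.1.
Definition dtgt (V E : finType) (gT : finGroupType) (t : E -> V) (alpha : E -> gT)
  (I : V -> {group gT}) (ge : gT * E) : dvert I := mkvert I (t ge.2) (ge.1 * alpha ge.2)%g.
Definition dbar (E : finType) (gT : finGroupType) (bar : E -> E) (alpha : E -> gT)
  (ge : gT * E) : gT * E := ((ge.1 * alpha ge.2)%g, bar ge.2).

Definition dlap (V E : finType) (gT : finGroupType) (s t : E -> V) (alpha : E -> gT)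
  (I : V -> {group gT}) : divisor (dvert I) -> divisor (dvert I) :=
  laplacian (dsrc s I) (dtgt t alpha I).

Definition dPic (V E : finType) (gT : finGroupType) (s t : E -> V) (alpha : E -> gT)
  (I : V -> {group gT}) := Pic (dsrc s I) (dtgt t alpha I).

Definition dto_pic (V E : finType) (gT : finGroupType) (s t : E -> V) (alpha : E -> gT)
  (I : V -> {group gT}) : divisor (dvert I) -> dPic s t alpha I :=
  @to_pic _ _ (dsrc s I) (dtgt t alpha I).

Definition dunit (V : finType) (gT : finGroupType) (I : V -> {group gT}) (n : int)
  : divisor (dvert I) := (\sum_(x : dvert I) delta x) *~ n.
Arguments dunit {V gT} I n.

Arguments dsrc {V E gT} s I ge.
Arguments dtgt {V E gT} t alpha I ge.
Arguments dlap {V E gT} s t alpha I _.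
Arguments dPic {V E gT} s t alpha I.
Arguments dto_pic {V E gT} s t alpha I _.

Lemma vact_proof (V : finType) (gT : finGroupType) (I : V -> {group gT}) (g : gT)
  (x : dvert I) :
  ((val x).1, (g *: (val x).2)%g).2 \in lcosets (I ((val x).1, (g *: (val x).2)%g).1) [set: gT].
Proof.
case: x => [[v C] /= /lcosetsP[h _ ->]].
by apply/lcosetsP; exists (g * h)%g; rewrite ?inE // lcosetM.
Qed.

Definition vact (V : finType) (gT : finGroupType) (I : V -> {group gT}) (g : gT)
  (x : dvert I) : dvert I := exist _ ((val x).1, (g *: (val x).2)%g) (vact_proof g x).

(* (g . D)(x) = D(g^-1 x), so that g . [x] = [g x] *)
Definition dact (V : finType) (gT : finGroupType) (I : V -> {group gT}) (g : gT)
  (D : divisor (dvert I)) : divisor (dvert I) := [ffun x => D (vact (g^-1)%g x)].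

(* Z[Gamma]-linearity, where Gamma acts on the target through phi : Gamma -> Gamma' *)
Definition zgamma_linear (V : finType) (gT gT' : finGroupType) (phi : gT -> gT')
  (I : V -> {group gT}) (I' : V -> {group gT'})
  (f : divisor (dvert I) -> divisor (dvert I')) : Prop :=
  (forall D1 D2, f (D1 + D2) = f D1 + f D2) /\
  (forall g D, f (dact g D) = dact (phi g) (f D)).
Arguments zgamma_linear {V gT gT'} phi {I I'} f.

Definition exact_seq (V E : finType) (gT : finGroupType) (s t : E -> V) (alpha : E -> gT)
  (I : V -> {group gT}) : Prop :=
  [/\ (* the maps are Z[Gamma]-linear (Z with trivial action) *)
      (forall n m, dunit I (n + m) = dunit I n + dunit I m) /\
      (forall g n, dact g (dunit I n) = dunit I n) /\
      zgamma_linear id (dlap s t alpha I),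
      (forall n, dunit I n = 0 -> n = 0),
      (forall D, dlap s t alpha I D = 0 <-> exists n, D = dunit I n),
      (forall D, dto_pic s t alpha I D = dto_pic s t alpha I 0 <->
                 exists D0, D = dlap s t alpha I D0) &
      (forall P : dPic s t alpha I, exists D, dto_pic s t alpha I D = P)].

Definition qalpha (E : finType) (gT : finGroupType) (H : {group gT}) (alpha : E -> gT)
  : E -> coset_of H := fun e => coset H (alpha e).
Definition qI (V : finType) (gT : finGroupType) (H : {group gT}) (I : V -> {group gT})
  : V -> {group coset_of H} := fun v => (I v / H)%G.

Definition qvert (V : finType) (gT : finGroupType) (H : {group gT}) (I : V -> {group gT})
  (x : dvert I) : dvert (qI H I) :=
  mkvert (qI H I) (dvert_base x) (coset H (fingroup.repr (dvert_coset x))).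

Definition qproj (V : finType) (gT : finGroupType) (H : {group gT}) (I : V -> {group gT})
  (D : divisor (dvert I)) : divisor (dvert (qI H I)) :=
  [ffun y => \sum_(x : dvert I | qvert H x == y) D x].

Definition qbeta (V : finType) (gT : finGroupType) (H : {group gT}) (I : V -> {group gT})
  (D : divisor (dvert I)) : divisor (dvert (qI H I)) :=
  [ffun y => \sum_(x : dvert I | qvert H x == y)
                (#|H :&: I (dvert_base x)|%:Z * D x)].

Arguments qproj {V gT} H {I} D.
Arguments qbeta {V gT} H {I} D.
Arguments qvert {V gT} H {I} x.

(* Main.v *)
Require Import Defs.
From HB Require Import structures.
From mathcomp Require Import all_boot all_order all_fingroup all_algebra.
From mathcomp Require Import generic_quotient.
Import GRing.Theory Num.Theory Order.TTheory.
Local Open Scope ring_scope.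

Section Graph.
Variables (VT ET : finType) (src tgt : ET -> VT).

Lemma ffun0E (x : VT) : (0 : divisor VT) x = 0.
Proof. by rewrite ffunE. Qed.

Lemma ffunDE' (D1 D2 : divisor VT) x : (D1 + D2) x = D1 x + D2 x.
Proof. by rewrite ffunE. Qed.
Lemma ffunNE' (D1 : divisor VT) x : (- D1) x = - D1 x.
Proof. by rewrite ffunE. Qed.
Lemma ffunBE (D1 D2 : divisor VT) x : (D1 - D2) x = D1 x - D2 x.
Proof. by rewrite ffunDE' ffunNE'. Qed.

Lemma deltaE (w u : VT) : delta w u = ((u == w) : nat)%:Z.
Proof. by rewrite ffunE. Qed.

Lemma lapE (D : divisor VT) u : laplacian src tgt D u =
  \sum_e D (src e) * (((src e == u) : nat)%:Z - ((tgt e == u) : nat)%:Z).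
Proof.
rewrite /laplacian sum_ffunE (partition_big src xpredT) //=.
apply: eq_bigr => w _; rewrite ffunMzE sum_ffunE mulrzz mulrC mulr_sumr.
apply: eq_bigr => e /eqP <-; rewrite ffunBE !deltaE; congr (_ * (_ - _)).
  by rewrite eq_sym.
by rewrite eq_sym.
Qed.

Variable sg : ET -> ET.
Hypothesis sg_inj : injective sg.
Hypothesis sg_src : forall e, src (sg e) = tgt e.
Hypothesis sg_tgt : forall e, tgt (sg e) = src e.

Lemma lapE2 (D : divisor VT) u : laplacian src tgt D u =
  \sum_(e | src e == u) (D u - D (tgt e)).
Proof.
rewrite lapE.
under eq_bigr do rewrite mulrBr.
rewrite sumrB [X in _ - X](reindex_inj sg_inj) /=.
under [X in _ - X]eq_bigr do rewrite sg_src sg_tgt.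
rewrite -sumrB [RHS]big_mkcond /=; apply: eq_bigr => e _.
by case: eqP => [-> | _]; rewrite ?mulr1 ?mulr0 ?subr0.
Qed.

Lemma lap_const c : laplacian src tgt [ffun=> c] = 0.
Proof.
apply/ffunP => u; rewrite lapE2 ffun0E; apply: big1 => e _.
by rewrite !ffunE subrr.
Qed.

Hypothesis conn : forall x y, connect (edge_rel src tgt) x y.

Lemma lap_ker (D : divisor VT) x0 : laplacian src tgt D = 0 ->
  forall y, D y = D x0.
Proof.
move=> hL.
case: (@arg_maxP _ int _ x0 xpredT D) => // m _ hm.
have prop : forall x e, D x = D m -> src e = x -> D (tgt e) = D m.
  move=> x e hx hs.
  have := congr1 (fun F : divisor VT => F x) hL; rewrite lapE2 ffun0E => h0.
  have hnn : forall e', src e' == x -> 0 <= D x - D (tgt e').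
    by move=> e' _; rewrite subr_ge0 hx; exact: hm.
  have /eqP := psumr_eq0P hnn h0 (introT eqP hs).
  by rewrite subr_eq0 hx => /eqP.
have key : forall p x, path (edge_rel src tgt) x p -> D x = D m -> D (last x p) = D m.
  elim=> [|y p IH] x //= /andP[/existsP[e /andP[/eqP hs /eqP ht]] pth] hx.
  by apply: IH => //; rewrite -ht; apply: prop hs.
have all_m : forall y, D y = D m.
  move=> y; have /connectP[p pth ->] := conn m y; exact: key.
by move=> y; rewrite !all_m.
Qed.

End Graph.

Lemma lap_comm (VT ET : finType) (src tgt : ET -> VT) (tau : VT -> VT) (sg : ET -> ET) :
  injective tau -> injective sg ->
  (forall e, src (sg e) = tau (src e)) -> (forall e, tgt (sg e) = tau (tgt e)) ->
  forall D : divisor VT,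
  laplacian src tgt [ffun x => D (tau x)] = [ffun x => laplacian src tgt D (tau x)].
Proof.
move=> tinj sinj hs ht D; apply/ffunP => u; rewrite ffunE !lapE.
rewrite [RHS](reindex_inj sinj) /=; apply: eq_bigr => e _.
by rewrite ffunE hs ht !(inj_eq tinj).
Qed.

Lemma sum_deltaE (VT : finType) (x : VT) : (\sum_y delta y) x = 1.
Proof.
rewrite sum_ffunE (bigD1 x) //= deltaE eqxx big1 ?addr0 //.
by move=> y /negbTE hy; rewrite deltaE eq_sym hy.
Qed.

Lemma sum_ind (T T' : finType) (f : T -> T') (a : T) (y : T') :
  \sum_(x | f x == y) ((a == x) : nat)%:Z = ((f a == y) : nat)%:Z.
Proof.
rewrite big_mkcond (bigD1 a) //= eqxx big1 ?addr0; first by case: ifP.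
by move=> x /negbTE hx; rewrite (eq_sym a) hx; case: ifP.
Qed.

Lemma sumr_const_pred (T : finType) (P : pred T) (c : int) :
  \sum_(i | P i) c = c *+ #|P|.
Proof. exact: sumr_const. Qed.

Lemma connect_map (T T' : finType) (e : rel T) (e' : rel T') (f : T -> T') :
  (forall x y, e x y -> e' (f x) (f y)) ->
  forall x y, connect e x y -> connect e' (f x) (f y).
Proof.
move=> he x y /connectP[p pth ->]; elim: p x pth => [|z p IH] x /=.
  by rewrite connect0.
case/andP => hxz pth; apply: connect_trans (IH _ pth).
exact: connect1 (he _ _ hxz).
Qed.

Set Implicit Arguments. Unset Strict Implicit.

Section Derived.
Variables (V : finType) (gT : finGroupType) (I : V -> {group gT}).
Lemma dunitE n (x : dvert I) : dunit I n x = n.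
Proof.
by rewrite /dunit ffunMzE sum_deltaE mulrzz mul1r.
Qed.
Lemma vactM g h (x : dvert I) : vact g (vact h x) = vact (g * h)%g x.
Proof. by apply: val_inj => /=; rewrite lcosetM. Qed.

Lemma vact1 (x : dvert I) : vact 1%g x = x.
Proof. by case: x => [[v C] hC]; apply: val_inj; rewrite /= lcoset1. Qed.

Lemma vactK g : cancel (@vact _ _ I g) (vact g^-1).
Proof. by move=> x; rewrite vactM mulVg vact1. Qed.

Lemma vact_inj g : injective (@vact _ _ I g).
Proof. exact: can_inj (vactK g). Qed.

Lemma vact_mkvert g v h : vact g (mkvert I v h) = mkvert I v (g * h)%g.
Proof. by apply: val_inj => /=; rewrite lcosetM. Qed.

Lemma mkvertP (x : dvert I) : x = mkvert I (dvert_base x) (fingroup.repr (dvert_coset x)).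
Proof.
case: x => [[v C] hC]; apply: val_inj; rewrite /= /dvert_coset /dvert_base /=.
congr pair; move/lcosetsP: (hC) => [g _ /= eC]; rewrite eC.
apply/esym/lcoset_eqP; apply: mem_repr (lcoset_refl _ _).
Qed.

Lemma mkvert_eq v a b : (mkvert I v a == mkvert I v b) = ((a^-1 * b)%g \in I v).
Proof.
apply/eqP/idP.
  move/(congr1 (@dvert_coset _ _ I)); rewrite /dvert_coset /= => h.
  by rewrite -mem_lcoset h lcoset_refl.
move=> h; apply: val_inj => /=; congr pair; apply/lcoset_eqP.
by rewrite mem_lcoset -(groupV) invMg invgK.
Qed.

End Derived.

Unset Implicit Arguments. Set Strict Implicit.

Section Exact.
Variables (V E : finType) (s t : E -> V) (bar : E -> E) (gT : finGroupType)
  (alpha : E -> gT) (I : V -> {group gT}).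
Hypothesis hser : serre_graph s t bar.
Hypothesis halpha : forall e, alpha (bar e) = ((alpha e)^-1)%g.

Lemma dbar_src ge : dsrc s I (dbar bar alpha ge) = dtgt t alpha I ge.
Proof. case: ge => g e; case: hser => _ _ hs; by rewrite /dsrc /dtgt /dbar /= hs. Qed.

Lemma dbar_tgt ge : dtgt t alpha I (dbar bar alpha ge) = dsrc s I ge.
Proof.
case: ge => g e; case: hser => hbb _ hs.
by rewrite /dsrc /dtgt /dbar /= halpha mulgK -hs hbb.
Qed.

Lemma dbar_inj : injective (dbar bar alpha).
Proof.
apply: (@can_inj _ _ _ (dbar bar alpha)) => -[g e].
case: hser => hbb _ _; by rewrite /dbar /= halpha mulgK hbb.
Qed.

Lemma dlap_equiv g D : dlap s t alpha I (dact g D) = dact g (dlap s t alpha I D).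
Proof.
apply: (@lap_comm _ _ _ _ (vact g^-1) (fun ge => ((g^-1 * ge.1)%g, ge.2))).
- exact: vact_inj.
- apply: (@can_inj _ _ _ (fun ge => ((g * ge.1)%g, ge.2))) => -[h e] /=.
  by rewrite mulKVg.
- by case=> h e; rewrite /dsrc /= vact_mkvert.
- by case=> h e; rewrite /dtgt /= vact_mkvert mulgA.
Qed.

Hypothesis conn : connected_graph (dsrc s I) (dtgt t alpha I).

Lemma exact_gen : exact_seq s t alpha I.
Proof.
case: (conn) => /card_gt0P[x0 _] hconn.
split.
- split; first by move=> n m; rewrite /dunit mulrzDr.
  split; first by move=> g n; apply/ffunP => x; rewrite ffunE !dunitE.
  by split; [exact: laplacianD | exact: dlap_equiv].
- move=> n h; have := congr1 (fun D : divisor _ => D x0) h.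
  by rewrite /= dunitE ffun0E.
- move=> D; split.
  + move=> hL; exists (D x0); apply/ffunP => y; rewrite dunitE.
    exact: (@lap_ker _ _ _ _ _ dbar_inj dbar_src dbar_tgt hconn D x0 hL y).
  + move=> [n ->].
    have -> : dunit I n = [ffun=> n] by apply/ffunP => y; rewrite dunitE ffunE.
    exact: (@lap_const _ _ _ _ _ dbar_inj dbar_src dbar_tgt n).
- move=> D; rewrite /dto_pic /to_pic; split.
  + by move/eqquotP/pic_relP => [D0 h]; exists D0; move: h; rewrite subr0.
  + by move=> [D0 ->]; apply/eqquotP/pic_relP; exists D0; rewrite subr0.
- by move=> P; exists (repr P); rewrite /dto_pic /to_pic reprK.
Qed.

End Exact.

Set Implicit Arguments. Unset Strict Implicit.

Section Quot.
Variables (V : finType) (gT : finGroupType) (I : V -> {group gT}) (H : {group gT}).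
Hypothesis nH : (H <| [set: gT])%g.

Lemma inN g : g \in 'N(H)%g.
Proof. exact: subsetP (normal_norm nH) g (in_setT g). Qed.

Lemma cosetM g h : coset H (g * h)%g = (coset H g * coset H h)%g.
Proof. by rewrite morphM ?inN. Qed.

Lemma cosetV g : coset H (g^-1)%g = ((coset H g)^-1)%g.
Proof. by rewrite morphV ?inN. Qed.

Lemma subN (A : {set gT}) : A \subset 'N(H)%g.
Proof. by apply/subsetP => x _; exact: inN. Qed.

Lemma mem_qI_inv v z : coset H z \in qI H I v ->
  exists2 i, i \in I v & exists2 h, h \in H & z = (i * h)%g.
Proof.
rewrite /qI /= => hz.
have := mem_morphpre (inN z) hz; rewrite quotientK ?subN // -normC ?subN //.
by case/mulsgP => i h hi hh ->; exists i => //; exists h.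
Qed.

Lemma coset_eq1 h : (coset H h == 1%g) = (h \in H).
Proof.
apply/eqP/idP; first exact: coset_idr (inN h).
exact: coset_id.
Qed.

Lemma qvert_mk v g : qvert H (mkvert I v g) = mkvert (qI H I) v (coset H g).
Proof.
rewrite /qvert /dvert_base /dvert_coset /=.
set r := fingroup.repr _.
have hr : r \in (g *: I v)%g by apply: mem_repr (lcoset_refl _ _).
apply/eqP; rewrite mkvert_eq -cosetV -cosetM /qI /=; apply: mem_quotient.
have -> : (r^-1 * g = (g^-1 * r)^-1)%g by rewrite invMg invgK.
by rewrite groupV -mem_lcoset.
Qed.


Lemma qvert_vact g (x : dvert I) : qvert H (vact g x) = vact (coset H g) (qvert H x).
Proof. by rewrite (mkvertP x) vact_mkvert !qvert_mk vact_mkvert cosetM. Qed.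

Definition sec (y : dvert (qI H I)) : dvert I :=
  mkvert I (dvert_base y) (fingroup.repr (fingroup.repr (dvert_coset y))).

Lemma sec_qvert y : qvert H (sec y) = y.
Proof. by rewrite /sec qvert_mk coset_reprK -mkvertP. Qed.

Lemma vactVK (gT' : finGroupType) (I' : V -> {group gT'}) g :
  cancel (@vact _ _ I' g^-1) (vact g).
Proof. by move=> x; rewrite vactM mulgV vact1. Qed.

Lemma qproj_add (D1 D2 : divisor (dvert I)) : qproj H (D1 + D2) = qproj H D1 + qproj H D2.
Proof.
apply/ffunP => y; rewrite ffunDE' !ffunE -big_split /=.
by apply: eq_bigr => x _; rewrite ffunDE'.
Qed.

Lemma qbeta_add (D1 D2 : divisor (dvert I)) : qbeta H (D1 + D2) = qbeta H D1 + qbeta H D2.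
Proof.
apply/ffunP => y; rewrite ffunDE' !ffunE -big_split /=.
by apply: eq_bigr => x _; rewrite ffunDE' mulrDr.
Qed.

Lemma qproj_act g (D : divisor (dvert I)) : qproj H (dact g D) = dact (coset H g) (qproj H D).
Proof.
apply/ffunP => y; rewrite /dact !ffunE (reindex_inj (@vact_inj _ _ I g)) /=.
apply: eq_big => [x | x _]; last by rewrite ffunE vactK.
by rewrite qvert_vact (can2_eq (vactK _) (vactVK _)).
Qed.

Lemma qbeta_act g (D : divisor (dvert I)) : qbeta H (dact g D) = dact (coset H g) (qbeta H D).
Proof.
apply/ffunP => y; rewrite /dact !ffunE (reindex_inj (@vact_inj _ _ I g)) /=.
apply: eq_big => [x | x _]; last by rewrite ffunE vactK.
by rewrite qvert_vact (can2_eq (vactK _) (vactVK _)).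
Qed.


Lemma qbeta_delta v :
  qbeta H (delta (mkvert I v 1%g)) = delta (mkvert (qI H I) v 1%g) *~ #|H :&: I v|%g.
Proof.
have hq : qvert H (mkvert I v 1%g) = mkvert (qI H I) v 1%g by rewrite qvert_mk morph1.
apply/ffunP => y; rewrite ffunMzE !ffunE.
rewrite big_mkcond (bigD1 (mkvert I v 1%g)) //= big1.
  rewrite hq deltaE eqxx mulr1 addr0 (eq_sym y) mulrzz.
  by case: eqP => _; rewrite ?mul1r ?mul0r.
move=> x hx; case: ifP => // _.
by rewrite deltaE (negbTE hx) mulr0.
Qed.

Lemma keyK (F : dvert I -> int) v c :
  \sum_(h in H) F (mkvert I v (c * h)%g) =
  \sum_(x | qvert H x == mkvert (qI H I) v (coset H c))
     #|H :&: I (dvert_base x)|%g%:Z * F x.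
Proof.
rewrite (partition_big (fun h => mkvert I v (c * h)%g)
   (fun x => qvert H x == mkvert (qI H I) v (coset H c))) /=; last first.
  by move=> h hh; rewrite qvert_mk cosetM (coset_id hh) mulg1.
apply: eq_bigr => x hx.
rewrite (eq_bigr (fun=> F x)); last by move=> h /andP[_ /eqP ->].
rewrite sumr_const_pred -mulr_natl natz; congr (_%:Z * _).
move: hx; rewrite (mkvertP x); set w := dvert_base x; set r := fingroup.repr _.
clearbody w r => {x} hx.
have ew : w = v by move/eqP/(congr1 (@dvert_base _ _ _)): hx; rewrite qvert_mk.
subst w.
move: hx; rewrite qvert_mk mkvert_eq -cosetV -cosetM => /mem_qI_inv[i hi [h1 hh1 ei]].
rewrite /dvert_base /= -(card_lcoset _ (h1^-1)%g).
apply: eq_card => h; rewrite [RHS]mem_lcoset invgK inE /=.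
rewrite -[h \in _]/((h \in H) && (mkvert I v (c * h)%g == mkvert I v r)) mkvert_eq.
rewrite -[(((c * h)^-1 * r)%g \in I v)]groupV invMg invgK mulgA ei -mulgA (groupMl _ hi) (groupMl _ hh1).
by rewrite andbC.
Qed.

End Quot.

Section QG.
Variables (V E : finType) (s t : E -> V) (gT : finGroupType) (alpha : E -> gT)
  (I : V -> {group gT}) (H : {group gT}).
Hypothesis nH : (H <| [set: gT])%g.

Lemma qsrc ge : qvert H (dsrc s I ge) = dsrc s (qI H I) (coset H ge.1, ge.2).
Proof. by rewrite /dsrc qvert_mk. Qed.

Lemma qtgt ge : qvert H (dtgt t alpha I ge) =
  dtgt t (qalpha H alpha) (qI H I) (coset H ge.1, ge.2).
Proof. by rewrite /dtgt qvert_mk // cosetM. Qed.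

Lemma lapsq D : qproj H (dlap s t alpha I D) =
  dlap s t (qalpha H alpha) (qI H I) (qbeta H D).
Proof.
apply/ffunP => y; rewrite ffunE /dlap.
under eq_bigr do rewrite lapE.
rewrite exchange_big /= lapE.
under eq_bigr do rewrite -mulr_sumr sumrB !sum_ind qsrc qtgt.
rewrite (partition_big (fun ge => (coset H ge.1, ge.2)) xpredT) //=.
apply: eq_bigr => -[c e] _.
under eq_bigr => ge /eqP hge do rewrite hge.
rewrite -mulr_suml; congr (_ * _).
rewrite ffunE /dsrc /= -(coset_reprK c) -keyK //.
set g0 := fingroup.repr c.
rewrite (eq_bigl (fun ge => (coset H ge.1 == coset H g0) && (ge.2 == e))); last first.
  by case=> g e'; rewrite xpair_eqE.
rewrite -(pair_big_dep (fun g => coset H g == coset H g0) (fun _ e' => e' == e)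
            (fun g e' => D (mkvert I (s e') g))) /=.
under eq_bigr do rewrite big_pred1_eq.
rewrite (reindex_inj (mulgI g0)) /=.
apply: eq_bigl => h.
by rewrite cosetM // -{2}(mulg1 (coset H g0)) (inj_eq (mulgI _)) coset_eq1.
Qed.


Lemma qproj_sub (A B : divisor (dvert I)) : qproj H (A - B) = qproj H A - qproj H B.
Proof.
apply/ffunP => y; rewrite ffunBE !ffunE -sumrB.
by apply: eq_bigr => x _; rewrite ffunBE.
Qed.

Lemma qproj_sec (D' : divisor (dvert (qI H I))) :
  qproj H [ffun x => \sum_(y | sec y == x) D' y] = D'.
Proof.
apply/ffunP => y; rewrite ffunE.
under eq_bigr do rewrite ffunE.
rewrite [RHS](_ : _ = \sum_(y' | y' == y) D' y'); last by rewrite big_pred1_eq.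
rewrite (partition_big (@sec _ _ I H) (fun x => qvert H x == y)) /=; last first.
  by move=> y' /eqP ->; rewrite sec_qvert.
apply: eq_bigr => x hx; apply: eq_bigl => y'.
case: eqP => [ex|]; rewrite ?andbT ?andbF //.
by move: hx; rewrite -ex sec_qvert.
Qed.

Lemma phiE D : dto_pic s t (qalpha H alpha) (qI H I) (qproj H (repr (dto_pic s t alpha I D)))
  = dto_pic s t (qalpha H alpha) (qI H I) (qproj H D).
Proof.
have /eqquotP/pic_relP[D0 h] := reprK (dto_pic s t alpha I D).
rewrite /dto_pic /to_pic; apply/eqquotP/pic_relP; exists (qbeta H D0).
by rewrite -qproj_sub h; exact: lapsq.
Qed.

Lemma qconn : connected_graph (dsrc s I) (dtgt t alpha I) ->
  connected_graph (dsrc s (qI H I)) (dtgt t (qalpha H alpha) (qI H I)).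
Proof.
case=> /card_gt0P[x0 _] hc; split; first by apply/card_gt0P; exists (qvert H x0).
move=> y1 y2; rewrite -(sec_qvert nH y1) -(sec_qvert nH y2).
apply: (@connect_map _ _ _ _ (qvert H)); last exact: hc.
move=> x y /existsP[ge /andP[/eqP hs /eqP ht]]; apply/existsP.
by exists (coset H ge.1, ge.2); rewrite -qsrc -qtgt hs ht !eqxx.
Qed.

End QG.

Unset Implicit Arguments. Set Strict Implicit.

Theorem proposition3p3 (V E : finType) (s t : E -> V) (bar : E -> E)
  (gT : finGroupType) (alpha : E -> gT) (I : V -> {group gT}) :
  serre_graph s t bar ->
  (forall e, alpha (bar e) = ((alpha e)^-1)%g) ->
  connected_graph (dsrc s I) (dtgt t alpha I) ->
  (* (1) *)
  exact_seq s t alpha I /\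
  (* (2) *)
  (forall H : {group gT}, (H <| [set: gT])%g ->
     exact_seq s t (qalpha H alpha) (qI H I) /\
     [/\ zgamma_linear (coset H) (qbeta H (I := I)) /\
         zgamma_linear (coset H) (qproj H (I := I)),
         (forall v : V,
            qbeta H (delta (mkvert I v 1%g)) =
            delta (mkvert (qI H I) v 1%g) *~ #|H :&: I v|),
         (* square Z -> Div *)
         (forall n : int, qbeta H (dunit I n) = dunit (qI H I) (#|H|%:Z * n)),
         (* square Div -> Div *)
         (forall D, qproj H (dlap s t alpha I D) =
                    dlap s t (qalpha H alpha) (qI H I) (qbeta H D)) &
         (* square Div -> Pic, with the induced surjection on Pic *)
         exists phi : dPic s t alpha I -> dPic s t (qalpha H alpha) (qI H I),
           (forall D, phi (dto_pic s t alpha I D) =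
                      dto_pic s t (qalpha H alpha) (qI H I) (qproj H D)) /\
           (forall P, exists Q, phi Q = P)]).
Proof.
move=> hser halpha hconn; split; first exact: (@exact_gen _ _ _ _ _ _ _ _ hser halpha hconn).
move=> H nH.
have hqa : forall e, qalpha H alpha (bar e) = ((qalpha H alpha e)^-1)%g.
  by move=> e; rewrite /qalpha halpha cosetV.
split; first exact: (@exact_gen _ _ _ _ _ _ _ _ hser hqa (qconn nH hconn)).
split.
- split; split.
  + exact: qbeta_add.
  + by move=> g D; exact: qbeta_act.
  + exact: qproj_add.
  + by move=> g D; exact: qproj_act.
- exact: qbeta_delta.
- move=> n; apply/ffunP => y; rewrite dunitE ffunE.
  under eq_bigr do rewrite dunitE.
  rewrite (mkvertP y) -(coset_reprK (fingroup.repr (dvert_coset y))).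
  have := keyK nH (fun _ => n) (dvert_base y) (fingroup.repr (fingroup.repr (dvert_coset y))).
  rewrite /= => <-.
  by rewrite sumr_const -mulr_natl natz.
- exact: lapsq.
- exists (fun P => dto_pic s t (qalpha H alpha) (qI H I) (qproj H (repr P))).
  split; first exact: phiE.
  move=> P; exists (dto_pic s t alpha I [ffun x => \sum_(y | @sec _ _ I H y == x) repr P y]).
  by rewrite phiE // qproj_sec // /dto_pic /to_pic reprK.
Qed.
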